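(* Let $\lambda>0$ and let $(B,D)$ be a random pair as in the context. If $\lambda\mathbf E[B1_{\{D=\infty\}}]<1$, $\mathbf E[\min\{B,D\}]<\infty$ and $\rho=\lambda\mathbf E[B]>1$, then the equation $z_\infty=\lambda\mathbf E[\min\{z_\infty B,D\}]$ has a unique solution $z_\infty\in(0,\infty)$.
   Context: $(B,D)$ is a random pair with values in $[0,\infty]^2$ whose law $\vartheta$ satisfies $\vartheta(\{0\}\times[0,\infty])=\vartheta([0,\infty]\times\{0\})=\vartheta(\{(\infty,\infty)\})=0$; arithmetic on $[0,\infty]$ with $x\cdot\infty=\infty$ for $x>0$. *)

(* Defs.v *)
From HB Require Import structures.
From mathcomp Require Import all_boot all_order all_algebra.
From mathcomp Require Import all_classical all_reals all_analysis.
From mathcomp Require Import measurable_realfun lebesgue_integral probability.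
Set Implicit Arguments. Unset Strict Implicit. Unset Printing Implicit Defensive.
Import Order.TTheory GRing.Theory Num.Theory.

Local Open Scope classical_set_scope.
Local Open Scope ring_scope.
Local Open Scope ereal_scope.

Definition admissible_pair d (T : measurableType d) (R : realType)
  (P : probability T R) (B D : T -> \bar R) : Prop :=
  measurable_fun setT B /\ measurable_fun setT D /\
  (forall w, 0 <= B w) /\ (forall w, 0 <= D w) /\
  P [set w | B w = 0] = 0 /\ P [set w | D w = 0] = 0 /\
  P [set w | B w = +oo /\ D w = +oo] = 0.

(* Main.v *)
Require Import Defs.
From HB Require Import structures.
From mathcomp Require Import all_boot all_order all_algebra.
From mathcomp Require Import all_classical all_reals all_analysis.
From mathcomp Require Import measurable_realfun lebesgue_integral probability.
From mathcomp Require Import ring lra.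
Set Implicit Arguments. Unset Strict Implicit. Unset Printing Implicit Defensive.
Import Order.TTheory GRing.Theory Num.Theory.
Import numFieldNormedType.Exports.
Local Open Scope classical_set_scope.
Local Open Scope ring_scope.
Lemma ivt_aux (R : realType) (k : R -> R) (t0 t1 c : R) :
  0 < t0 -> t0 <= t1 ->
  (forall t, 0 < t -> 0 <= k t) ->
  (forall t s, 0 < t -> t <= s -> k t <= k s) ->
  (forall t s, 0 < t -> t <= s -> t * k s <= s * k t) ->
  k t0 <= c <= k t1 ->
  exists t, [/\ t0 <= t, t <= t1 & k t = c].
Proof.
move=> t00 t01 kpos mono scal /andP[c0 c1].
pose cl (t : R) := Num.max t0 (Num.min t t1).
have clin t : t0 <= cl t <= t1.
  by rewrite /cl le_max lexx /= ge_max t01 /= ge_min lexx orbT.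
have clid t : t0 <= t -> t <= t1 -> cl t = t.
  by move=> h1 h2; rewrite /cl (min_idPl h2) (max_idPr h1).
have clmono x y : x <= y -> cl x <= cl y /\ cl y - cl x <= y - x.
  move=> xy; rewrite /cl.
  case: (leP x t1) => h1; case: (leP y t1) => h2;
  rewrite ?(min_idPl h1) ?(min_idPl h2) ?(min_idPr (ltW h1)) ?(min_idPr (ltW h2));
  case: (leP t0 x) => h3; case: (leP t0 y) => h4;
  rewrite ?(max_idPr h3) ?(max_idPr h4) ?(max_idPl (ltW h3)) ?(max_idPl (ltW h4))
    ?(max_idPr t01) ?(max_idPl (ltW h3)); split; lra.
pose g t := k (cl t).
pose L := k t1 / t0.
have L0 : 0 <= L by rewrite /L divr_ge0 // ?(ltW t00) // kpos // (lt_le_trans t00).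
have lip a b : t0 <= a -> a <= b -> b <= t1 -> 0 <= k b - k a <= (b - a) * L.
  move=> ha hab hb; have a0 : 0 < a by apply: lt_le_trans ha.
  have kab := mono _ _ a0 hab.
  have sc := scal _ _ a0 hab.
  have ka1 : k a <= k t1 by apply: mono => //; apply: le_trans hb.
  have ka0 := kpos _ a0.
  apply/andP; split; first lra.
  rewrite /L mulrA ler_pdivlMr //.
  have h1 : t0 * (k b - k a) <= a * (k b - k a) by apply: ler_wpM2r; lra.
  have h2 : a * (k b - k a) <= (b - a) * k a by lra.
  have h3 : (b - a) * k a <= (b - a) * k t1 by apply: ler_wpM2l; lra.
  lra.
have glip x y : x <= y -> `|g y - g x| <= (y - x) * L.
  move=> xy; have [m1 m2] := clmono x y xy.
  have /andP[hx1 hx2] := clin x; have /andP[hy1 hy2] := clin y.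
  have /andP[l1 l2] := lip (cl x) (cl y) hx1 m1 hy2.
  rewrite /g ger0_norm //; apply: le_trans l2 _; apply: ler_wpM2r => //.
have gcont : continuous g.
  move=> x; apply/cvgrPdist_le => e e0.
  have L1 : 0 < L + 1 by lra.
  near=> y.
  have : `|x - y| <= e / (L + 1).
    near: y; apply/nbhs_normP; exists (e / (L + 1)); first exact: divr_gt0.
    by move=> z /= /ltW.
  move=> hxy.
  have hb : `|g x - g y| <= `|x - y| * L.
    case: (leP x y) => xy.
      rewrite distrC (distrC x) (@ger0_norm _ (y - x)) ?glip // subr_ge0 //.
    rewrite (@ger0_norm _ (x - y)) ?glip ?subr_ge0 ?ltW //.
  apply: (le_trans hb).
  have : `|x - y| * (L + 1) <= e by rewrite -ler_pdivlMr.
  have := normr_ge0 (x - y); nra.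
have [t tin gt] : exists2 t, t \in `[t0, t1] & g t = c.
  apply: IVT => //; first exact: continuous_subspaceT.
  rewrite /g clid // ?clid // (min_idPl _) ?(max_idPr _) ?c0 ?c1 //;
  by apply: mono => //.
move: tin; rewrite in_itv /= => /andP[h1 h2].
by exists t; split => //; rewrite -gt /g clid.
Unshelve. all: by end_near.
Qed.
Local Open Scope ereal_scope.
Lemma conc_pt (R : realType) (x y : \bar R) (a b c : R) :
  0 <= x -> 0 <= y -> (0 < a)%R -> (a <= b)%R -> (b <= c)%R ->
  (b - a)%:E * mine x (c%:E * y) + (c - b)%:E * mine x (a%:E * y)
  <= (c - a)%:E * mine x (b%:E * y).
Proof.
move=> x0 y0 a0 ab bc.
have b0 : (0 < b)%R by apply: lt_le_trans ab.
have c0 : (0 < c)%R by apply: lt_le_trans bc.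
case: y y0 => [s|_|//]; last first.
  rewrite !gt0_muley ?lte_fin // !miney.
  case: x x0 => [r|_|//]; last first.
    have [ac|] := eqVneq a c.
      have ab' : a = b by apply/le_anti; rewrite ab /= ac.
      by rewrite ab' -ac ab' !subrr !mul0e adde0.
    move=> ac; have -> : (c - a)%:E * +oo = +oo.
      rewrite gt0_muley // lte_fin subr_gt0 lt_neqAle ac /=.
      exact: le_trans ab bc.
    exact: leey.
  rewrite lee_fin => r0.
  by rewrite -!EFinM -EFinD lee_fin; rewrite le_eqVlt; apply/orP; left; apply/eqP; ring.
rewrite lee_fin => s0.
case: x x0 => [r|_|//]; last first.
  rewrite -!EFinM -EFinD lee_fin; rewrite le_eqVlt; apply/orP; left; apply/eqP; ring.
rewrite lee_fin => r0.
rewrite -!EFinM -!EFin_min -!EFinM -EFinD lee_fin.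
have ba : (0 <= b - a)%R by rewrite subr_ge0.
have cb : (0 <= c - b)%R by rewrite subr_ge0.
have m1 : (Num.min r (c * s) <= r)%R by rewrite ge_min lexx.
have m2 : (Num.min r (c * s) <= c * s)%R by rewrite ge_min lexx orbT.
have m3 : (Num.min r (a * s) <= r)%R by rewrite ge_min lexx.
have m4 : (Num.min r (a * s) <= a * s)%R by rewrite ge_min lexx orbT.
have e1 := ler_wpM2l ba m1; have e2 := ler_wpM2l ba m2.
have e3 := ler_wpM2l cb m3; have e4 := ler_wpM2l cb m4.
case: (leP r (b * s)%R) => h.
  lra.

have : ((b - a) * (c * s) + (c - b) * (a * s) = (c - a) * (b * s))%R by ring.
lra.
Qed.

Lemma mine_mono_pt (R : realType) (x y : \bar R) (t s : R) :
  0 <= y -> (t <= s)%R -> mine x (t%:E * y) <= mine x (s%:E * y).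
Proof.
move=> y0 ts; rewrite le_min !ge_min lexx /=; apply/orP; right.
by apply: lee_wpmul2r => //; rewrite lee_fin.
Qed.

Lemma mine_ge0_pt (R : realType) (x y : \bar R) (t : R) :
  0 <= x -> 0 <= y -> (0 <= t)%R -> 0 <= mine x (t%:E * y).
Proof.
by move=> x0 y0 t0; rewrite le_min x0 /=; apply: mule_ge0.
Qed.

Lemma kmeas d (T : measurableType d) (R : realType) (B D : T -> \bar R) (t : R) :
  measurable_fun setT B -> measurable_fun setT D ->
  measurable_fun setT (fun w => mine (B w) (t%:E * D w)).
Proof.
by move=> mB mD; apply: measurable_mine => //; apply: measurable_funeM.
Qed.

Lemma k_mono d (T : measurableType d) (R : realType) (P : probability T R)
  (B D : T -> \bar R) (t s : R) :
  measurable_fun setT B -> measurable_fun setT D ->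
  (forall w, 0 <= B w) -> (forall w, 0 <= D w) -> (0 <= t)%R -> (t <= s)%R ->
  \int[P]_w mine (B w) (t%:E * D w) <= \int[P]_w mine (B w) (s%:E * D w).
Proof.
move=> mB mD B0 D0 t0 ts.
apply: ge0_le_integral => //.
- by move=> w _; apply: mine_ge0_pt.
- exact: kmeas.
- exact: kmeas.
- by move=> w _; apply: mine_mono_pt.
Qed.

Lemma k_scal d (T : measurableType d) (R : realType) (P : probability T R)
  (B D : T -> \bar R) (t s : R) :
  measurable_fun setT B -> measurable_fun setT D ->
  (forall w, 0 <= B w) -> (forall w, 0 <= D w) -> (0 < t)%R -> (t <= s)%R ->
  t%:E * \int[P]_w mine (B w) (s%:E * D w) <= s%:E * \int[P]_w mine (B w) (t%:E * D w).
Proof.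
move=> mB mD B0 D0 t0 ts.
have s0 : (0 < s)%R by apply: lt_le_trans ts.
rewrite -!ge0_integralZl_EFin //; try (by move=> w _; apply: mine_ge0_pt => //; apply: ltW);
  try (exact: kmeas); try (exact: ltW).
apply: ge0_le_integral => //.
- move=> w _; apply: mule_ge0; first by rewrite lee_fin ltW.
  by apply: mine_ge0_pt => //; apply: ltW.
- by apply: measurable_funeM; exact: kmeas.
- by apply: measurable_funeM; exact: kmeas.
move=> w _; rewrite !mine_pMr //; try by rewrite lee_fin ltW.
rewrite !muleA -!EFinM (mulrC s t).
rewrite le_min !ge_min lexx !orbT andbT; apply/orP; left.
by apply: lee_wpmul2r => //; rewrite lee_fin.
Qed.

Lemma k_fin d (T : measurableType d) (R : realType) (P : probability T R)
  (B D : T -> \bar R) (t : R) :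
  measurable_fun setT B -> measurable_fun setT D ->
  (forall w, 0 <= B w) -> (forall w, 0 <= D w) -> (0 < t)%R ->
  \int[P]_w mine (B w) (D w) < +oo ->
  \int[P]_w mine (B w) (t%:E * D w) < +oo.
Proof.
move=> mB mD B0 D0 t0 Hf.
pose M := Num.max 1%R t.
have M1 : (1 <= M)%R by rewrite le_max lexx.
have M0 : (0 <= M)%R by apply: le_trans M1.
have tM : (t <= M)%R by rewrite le_max lexx orbT.
apply: (@le_lt_trans _ _ (M%:E * \int[P]_w mine (B w) (D w))); last first.
  have Hge : 0 <= \int[P]_w mine (B w) (D w).
    by apply: integral_ge0 => w _; rewrite le_min B0 D0.
  move: Hf Hge; case: (\int[P]_w mine (B w) (D w)) => // r _ _.
  by rewrite -EFinM ltry.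
rewrite -ge0_integralZl_EFin //; try (by move=> w _; rewrite le_min B0 D0);
  try (exact: measurable_mine).
apply: ge0_le_integral => //.
- by move=> w _; apply: mine_ge0_pt => //; apply: ltW.
- exact: kmeas.
- by apply: measurable_funeM; apply: measurable_mine.
move=> w _; rewrite mine_pMr // ?lee_fin //.
rewrite le_min !ge_min; apply/andP; split.
  by apply/orP; left; apply: lee_pemull.
apply/orP; right; apply: lee_wpmul2r => //; rewrite lee_fin.
Qed.

Lemma k_conc d (T : measurableType d) (R : realType) (P : probability T R)
  (B D : T -> \bar R) (a b c : R) :
  measurable_fun setT B -> measurable_fun setT D ->
  (forall w, 0 <= B w) -> (forall w, 0 <= D w) ->
  (0 < a)%R -> (a <= b)%R -> (b <= c)%R ->
  (b - a)%:E * \int[P]_w mine (B w) (c%:E * D w)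
  + (c - b)%:E * \int[P]_w mine (B w) (a%:E * D w)
  <= (c - a)%:E * \int[P]_w mine (B w) (b%:E * D w).
Proof.
move=> mB mD B0 D0 a0 ab bc.
have b0 : (0 < b)%R by apply: lt_le_trans ab.
have c0 : (0 < c)%R by apply: lt_le_trans bc.
have ba : (0 <= b - a)%R by rewrite subr_ge0.
have cb : (0 <= c - b)%R by rewrite subr_ge0.
have ca : (0 <= c - a)%R by rewrite subr_ge0 (le_trans ab).
have g0 (t : R) : (0 < t)%R -> forall w, [set: T] w -> 0 <= mine (B w) (t%:E * D w).
  by move=> t0 w _; apply: mine_ge0_pt => //; apply: ltW.
rewrite -!ge0_integralZl_EFin //; try exact: g0; try exact: kmeas.
rewrite -ge0_integralD //; first last.
- by apply: measurable_funeM; exact: kmeas.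
- by move=> w _; apply: mule_ge0; [rewrite lee_fin|exact: g0].
- by apply: measurable_funeM; exact: kmeas.
- by move=> w _; apply: mule_ge0; [rewrite lee_fin|exact: g0].
apply: ge0_le_integral => //.
- by move=> w _; apply: adde_ge0; apply: mule_ge0; rewrite ?lee_fin //; exact: g0.
- by apply: emeasurable_funD; apply: measurable_funeM; exact: kmeas.
- by apply: measurable_funeM; exact: kmeas.
by move=> w _; apply: conc_pt.
Qed.

Lemma k_large d (T : measurableType d) (R : realType) (P : probability T R)
  (B D : T -> \bar R) (lam : R) :
  measurable_fun setT B -> measurable_fun setT D ->
  (forall w, 0 <= B w) -> (forall w, 0 <= D w) ->
  P [set w | D w = 0] = 0 -> (0 < lam)%R ->
  1 < lam%:E * \int[P]_w B w ->
  exists t, (0 < t)%R /\ 1 < lam%:E * \int[P]_w mine (B w) (t%:E * D w).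
Proof.
move=> mB mD B0 D0 PD0 lam0 Hlam.
case: (pselect (exists t, (0 < t)%R /\ 1 < lam%:E * \int[P]_w mine (B w) (t%:E * D w))) => // Hn.
exfalso.
pose g' (n : nat) w := mine (B w) (n.+1%:R%:E * D w).
have hk n : \int[P]_w g' n w <= lam^-1%:E.
  have : lam%:E * \int[P]_w g' n w <= 1.
    rewrite leNgt; apply/negP => h; apply: Hn; exists n.+1%:R; split => //.
  move=> h; rewrite -(mul1e (\int[P]_w g' n w)) -(@mulVf _ lam) ?gt_eqF //.
  rewrite EFinM -muleA -[leRHS]mule1; apply: lee_wpmul2l => //.
  by rewrite lee_fin invr_ge0 ltW.
have mg' n : measurable_fun setT (g' n) by exact: kmeas.
have g'0 n x : setT x -> 0 <= g' n x by move=> _; apply: mine_ge0_pt.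
have nd_g' x : setT x -> nondecreasing_seq (g'^~ x).
  by move=> _ m n mn; apply: mine_mono_pt => //; rewrite ler_nat ltnS.
have MC := monotone_convergence P measurableT mg' g'0 nd_g'.
pose f' x := limn (g'^~ x).
have mf' : measurable_fun setT f'.
  apply: (@emeasurable_fun_cvg _ _ _ setT g' f' mg') => x _.
  exact: ereal_nondecreasing_is_cvgn (nd_g' x I).
have f'0 x : 0 <= f' x.
  apply: lime_ge; first exact: ereal_nondecreasing_is_cvgn (nd_g' x I).
  by apply: nearW => n; apply: g'0.
have key x A : (0 < D x) -> (0 <= A)%R -> A%:E <= B x -> A%:E <= f' x.
  move=> Dx0 A0 AB.
  apply: lime_ge; first exact: ereal_nondecreasing_is_cvgn (nd_g' x I).
  rewrite /g'; case: (D x) Dx0 => [s|_|//]; last first.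
    by apply: nearW => n; rewrite gt0_muley ?lte_fin // miney.
  rewrite lte_fin => s0.
  near=> n.
  rewrite le_min AB /= -EFinM lee_fin -ler_pdivrMr //.
  have hN : (A / s < (Num.Def.archi_bound (A / s))%:R)%R.
    by apply: archi_boundP; rewrite divr_ge0 // ltW.
  apply: (le_trans (ltW hN)); rewrite ler_nat.
  by near: n; exists (Num.Def.archi_bound (A / s)) => // n /= hn; apply: leqW.
have Bf : \int[P]_w B w <= \int[P]_w f' w.
  apply: ae_ge0_le_integral => //.
  exists [set w | D w = 0]; split => //.
    rewrite -[X in measurable X]setTI; apply: (mD measurableT [set 0]); exact: emeasurable_set1.
  move=> w /= Hw; apply: contrapT => Dw; apply: Hw => _.
  have Dw0 : 0 < D w by rewrite lt_neqAle eq_sym D0 andbT; apply/eqP.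
  move: (key w) (B0 w); case: (B w) => [b||//] kw.
    by rewrite lee_fin => b0; apply: kw => //.
  move=> _; have h : f' w = +oo.
    by apply/eqyP => A A0; apply: kw => //; [exact: ltW|exact: leey].
  by move: h; rewrite /f' => ->.
have : \int[P]_w f' w <= lam^-1%:E.
  rewrite MC; apply: lime_le.
    apply: ereal_nondecreasing_is_cvgn => m n mn.
    apply: k_mono => //; rewrite ler_nat ltnS //.
  by apply: nearW => n; apply: hk.
move=> h; have := le_trans Bf h => h2.
have : lam%:E * \int[P]_w B w <= 1.
  rewrite -(@mulfV _ lam) ?gt_eqF // EFinM; apply: lee_wpmul2l => //.
  by rewrite lee_fin ltW.
by rewrite leNgt Hlam.
Unshelve. all: by end_near.
Qed.

Lemma k_small d (T : measurableType d) (R : realType) (P : probability T R)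
  (B D : T -> \bar R) (lam : R) :
  measurable_fun setT B -> measurable_fun setT D ->
  (forall w, 0 <= B w) -> (forall w, 0 <= D w) -> (0 < lam)%R ->
  \int[P]_w mine (B w) (D w) < +oo ->
  lam%:E * \int[P]_w (if D w == +oo then B w else 0) < 1 ->
  exists t, (0 < t)%R /\ lam%:E * \int[P]_w mine (B w) (t%:E * D w) < 1.
Proof.
move=> mB mD B0 D0 lam0 Hfin Hlam.
case: (pselect (exists t, (0 < t)%R /\ lam%:E * \int[P]_w mine (B w) (t%:E * D w) < 1)) => // Hn.
exfalso.
pose f_ (n : nat) w := mine (B w) ((n.+1%:R^-1)%:E * D w).
pose f w := if D w == +oo then B w else 0.
pose g w := mine (B w) (D w).
have hk n : lam^-1%:E <= \int[P]_w f_ n w.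
  have : 1 <= lam%:E * \int[P]_w f_ n w.
    rewrite leNgt; apply/negP => h; apply: Hn; exists (n.+1%:R^-1)%R; split => //.
  move=> h.
  have -> : \int[P]_w f_ n w = lam^-1%:E * (lam%:E * \int[P]_w f_ n w).
    by rewrite muleA -EFinM mulVf ?gt_eqF // mul1e.
  rewrite -[leLHS]mule1; apply: lee_wpmul2l => //.
  by rewrite lee_fin invr_ge0 ltW.
have mf_ n : measurable_fun setT (f_ n) by exact: kmeas.
have fcv x : f_ ^~ x @ \oo --> f x.
  rewrite /f_ /f; move: (D0 x); case: (D x) => [s||//] s0; last first.
    rewrite eqxx.
    have -> : (fun n : nat => mine (B x) ((n.+1%:R^-1)%:E * +oo)) = cst (B x).
      by apply/funext => n; rewrite gt0_muley ?lte_fin ?invr_gt0 // miney.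
    exact: cvg_cst.
  have hc : (fun n : nat => (n.+1%:R^-1)%:E * s%:E) @ \oo --> 0.
    rewrite -(mul0e s%:E); apply: cvgeM; [by []|exact: cvge_harmonic|exact: cvg_cst].
  apply: (squeeze_cvge _ (cvg_cst 0) hc).
  apply: nearW => n; rewrite mine_ge0_pt //= ?invr_ge0 //.
  by rewrite ge_min lexx orbT.
have mf : measurable_fun setT f.
  by apply: (@emeasurable_fun_cvg _ _ _ setT f_ f mf_) => x _; exact: fcv.
have ig : P.-integrable setT g.
  apply/integrableP; split; first exact: measurable_mine.
  under eq_integral do rewrite gee0_abs ?le_min ?B0 ?D0 //.
  exact: Hfin.
have dom : forall x n, setT x -> `|f_ n x| <= g x.
  move=> x n _; rewrite gee0_abs; last by apply: mine_ge0_pt; rewrite // invr_ge0.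
  have := @mine_mono_pt R (B x) (D x) (n.+1%:R^-1)%R 1%R (D0 x).
  by rewrite mul1e => ->; rewrite // invf_le1 // ler1n.
have [_ _ conv] := dominated_convergence measurableT mf_ mf
  (aeW _ (fun x _ => fcv x)) ig (aeW _ dom).
have : lam^-1%:E <= \int[P]_w f w.
  rewrite -(cvg_lim _ conv) //; apply: lime_ge; first by apply/cvg_ex; eexists; exact: conv.
  by apply: nearW => n; apply: hk.
move=> h.
have : 1 <= lam%:E * \int[P]_w f w.
  rewrite -(@mulfV _ lam) ?gt_eqF // EFinM; apply: lee_wpmul2l => //.
  by rewrite lee_fin ltW.
by rewrite leNgt Hlam.
Qed.

Unset Implicit Arguments.
Theorem mainTheorem7 (d : measure_display) (T : measurableType d) (R : realType)
  (P : probability T R) (B D : T -> \bar R) (lambda : R) :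
  (0 < lambda)%R ->
  admissible_pair P B D ->
  lambda%:E * \int[P]_w (if D w == +oo then B w else 0) < 1 ->
  \int[P]_w mine (B w) (D w) < +oo ->
  1 < lambda%:E * \int[P]_w B w ->
  exists! z : R, (0 < z)%R /\
    z%:E = lambda%:E * \int[P]_w mine (z%:E * B w) (D w).
Proof.
move=> lam0 [mB [mD [B0 [D0 [_ [PD0 _]]]]]] Hinf Hfin Hrho.
pose K t := \int[P]_w mine (B w) (t%:E * D w).
pose k t := fine (K t).
have Kge0 t : (0 <= t)%R -> 0 <= K t.
  by move=> t0; apply: integral_ge0 => w _; apply: mine_ge0_pt.
have KE t : (0 < t)%R -> K t = (k t)%:E.
  move=> t0; rewrite /k fineK // ge0_fin_numE ?Kge0 ?ltW //.
  exact: k_fin.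
have kpos t : (0 < t)%R -> (0 <= k t)%R.
  by move=> t0; apply: fine_ge0; apply: Kge0; apply: ltW.
have kmono t s : (0 < t)%R -> (t <= s)%R -> (k t <= k s)%R.
  move=> t0 ts; have := k_mono P mB mD B0 D0 (ltW t0) ts.
  by rewrite -/(K t) -/(K s) KE // KE ?lee_fin //; apply: lt_le_trans ts.
have kscal t s : (0 < t)%R -> (t <= s)%R -> (t * k s <= s * k t)%R.
  move=> t0 ts; have := k_scal P mB mD B0 D0 t0 ts.
  have s0 : (0 < s)%R by apply: lt_le_trans ts.
  by rewrite -/(K t) -/(K s) (KE t) // (KE s) // -!EFinM lee_fin.
have kconc a b c : (0 < a)%R -> (a <= b)%R -> (b <= c)%R ->
    ((b - a) * k c + (c - b) * k a <= (c - a) * k b)%R.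
  move=> a0 ab bc; have := k_conc P mB mD B0 D0 a0 ab bc.
  have b0 : (0 < b)%R by apply: lt_le_trans ab.
  have c0 : (0 < c)%R by apply: lt_le_trans bc.
  by rewrite -/(K a) -/(K b) -/(K c) KE // KE // KE // -!EFinM -EFinD lee_fin.
have lamV x : (lambda * x < 1)%R = (x < lambda^-1)%R.
  by rewrite -[RHS](ltr_pM2l lam0) mulfV ?gt_eqF.
have lamV' x : (1 < lambda * x)%R = (lambda^-1 < x)%R.
  by rewrite -[RHS](ltr_pM2l lam0) mulfV ?gt_eqF.
have eqv z : (0 < z)%R ->
    (z%:E = lambda%:E * \int[P]_w mine (z%:E * B w) (D w)) <-> (k (z^-1)%R = lambda^-1)%R.
  move=> z0.
  have -> : \int[P]_w mine (z%:E * B w) (D w) = z%:E * K (z^-1)%R.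
    rewrite /K -ge0_integralZl_EFin //; try (by move=> w _; apply: mine_ge0_pt; rewrite // invr_ge0 ltW);
      try (exact: kmeas); try (exact: ltW).
    apply: eq_integral => w _.
    by rewrite mine_pMr ?lee_fin ?ltW // muleA -EFinM mulfV ?gt_eqF // mul1e.
  rewrite KE ?invr_gt0 // -!EFinM; split => h.
    have {}h : z = (lambda * (z * k (z^-1)%R))%R by case: h.
    have : (z * 1 = z * (lambda * k (z^-1)%R))%R by rewrite mulr1 mulrCA -h.
    move/(mulfI (lt0r_neq0 z0)) => h2.
    by rewrite -[LHS]mul1r -(mulVf (lt0r_neq0 lam0)) -mulrA -h2 mulr1.
  by rewrite h mulrCA mulfV ?gt_eqF // mulr1.
have [t0 [t00 Ht0]] := @k_small _ _ _ P _ _ _ mB mD B0 D0 lam0 Hfin Hinf.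
have [t1' [t10 Ht1]] := @k_large _ _ _ P _ _ _ mB mD B0 D0 PD0 lam0 Hrho.
move: Ht0 Ht1; rewrite -/(K t0) -/(K t1') KE // KE // -!EFinM !lte_fin lamV lamV' => Ht0 Ht1.
pose t1 := Num.max t0 t1'.
have t01 : (t0 <= t1)%R by rewrite /t1 le_max lexx.
have kt1 : (lambda^-1 <= k t1)%R.
  apply: ltW; apply: (lt_le_trans Ht1); apply: kmono => //; by rewrite /t1 le_max lexx orbT.
have hc : (k t0 <= lambda^-1 <= k t1)%R by rewrite (ltW Ht0) kt1.
have [t [tt0 tt1 kt]] := @ivt_aux R k t0 t1 (lambda^-1)%R t00 t01 kpos kmono kscal hc.
have t0p : (0 < t)%R by apply: lt_le_trans tt0.
have noneq a b : (0 < a)%R -> (a < b)%R -> (k a = lambda^-1)%R -> (k b = lambda^-1)%R -> False.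
  move=> a0 ab ka kb.
  pose c := Num.max b t1'.
  have bc : (b <= c)%R by rewrite /c le_max lexx.
  have h := kconc a b c a0 (ltW ab) bc.
  rewrite ka kb in h.
  have : ((b - a) * k c <= (b - a) * lambda^-1)%R.
    move: h; clear; move: (k c) (lambda^-1)%R => x m h.
    have e : ((c - a) * m - (c - b) * m = (b - a) * m)%R by ring.
    rewrite -e; lra.
  rewrite ler_pM2l ?subr_gt0 // => kc.
  have : (k t1' <= k c)%R by apply: kmono => //; rewrite /c le_max lexx orbT.
  move: Ht1; lra.
exists (t^-1)%R; split.
  split; first by rewrite invr_gt0.
  by apply/(eqv _ _).2; rewrite ?invrK ?invr_gt0.
move=> z [z0 Hz]; have kz := (eqv z z0).1 Hz.
have zi0 : (0 < (z^-1)%R)%R by rewrite invr_gt0.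
suff -> : t = (z^-1)%R by rewrite invrK.
case: (ltgtP t (z^-1)%R) => // h; exfalso.
  exact: (noneq t (z^-1)%R).
exact: (noneq (z^-1)%R t).
Qed.
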